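(* Let $\mathcal C = (\mathcal X, \Sigma, \mathcal F)$ be a string constraint problem as described in the context. For every variable $x \in \mathcal X$ and every assignment $\rho$ to $\mathcal X$, the valid domain $V^\rho_x$ is a regular language over $\Sigma$.
   Context: A string constraint problem is a triple $\mathcal C = (\mathcal X, \Sigma, \mathcal F)$, where $\mathcal X = \{x_1,\ldots,x_n\}$ is a finite set of variables, $\Sigma$ is a finite alphabet, and $\mathcal F = \{f_1,\ldots,f_o\}$ is a finite set of formulas generated by the grammar $f ::= f \lor f \mid \lnot f \mid \mathrm{match}(x,\alpha)$, where $x \in \mathcal X$ and $\alpha$ is a regular expression over $\Sigma$. An assignment $\rho$ to $\mathcal X$ maps each $x_i$ to a string $\rho(x_i) \in \Sigma^*$. The atom $\mathrm{match}(x,\alpha)$ is true under $\rho$ iff $\rho(x) \in L(\alpha)$, the language of $\alpha$; $\lor$ and $\lnot$ have their usual boolean meaning. The solution set is $sol(\mathcal C) = \{\rho \mid \rho \models f \text{ for all } f \in \mathcal F\}$. For assignments $\rho,\rho'$ to $\mathcal X$, their concatenation is the assignment $\rho\rho'$ with $(\rho\rho')(x_j) = \rho(x_j)\rho'(x_j)$ for all $j$. The valid domain of $x_i$ relative to $\rho$ is $V^\rho_{x_i} = \{ w \in \Sigma^* \mid \exists \rho' : \rho'(x_i) = w \land \rho\rho' \in sol(\mathcal C)\}$, where $\rho'$ ranges over assignments to $\mathcal X$. *)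

(* Defs.v *)
From Stdlib Require List.
From mathcomp Require Import all_boot.
Set Implicit Arguments. Unset Strict Implicit. Unset Printing Implicit Defensive.

Inductive regex (Sigma : Type) : Type :=
| RVoid : regex Sigma
| REps : regex Sigma
| RAtom : Sigma -> regex Sigma
| RCat : regex Sigma -> regex Sigma -> regex Sigma
| RUnion : regex Sigma -> regex Sigma -> regex Sigma
| RStar : regex Sigma -> regex Sigma.

Fixpoint lang (Sigma : finType) (r : regex Sigma) (w : seq Sigma) : Prop :=
  match r with
  | RVoid => False
  | REps => w = [::]
  | RAtom a => w = [:: a]
  | RCat r1 r2 => exists u v, w = u ++ v /\ lang r1 u /\ lang r2 v
  | RUnion r1 r2 => lang r1 w \/ lang r2 w
  | RStar r1 => exists ws : seq (seq Sigma),
      w = flatten ws /\ forall u, u \in ws -> lang r1 u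
  end.

Definition regular (Sigma : finType) (L : seq Sigma -> Prop) : Prop :=
  exists r : regex Sigma, forall w, L w <-> lang r w.

Inductive formula (X Sigma : Type) : Type :=
| FOr : formula X Sigma -> formula X Sigma -> formula X Sigma
| FNot : formula X Sigma -> formula X Sigma
| FMatch : X -> regex Sigma -> formula X Sigma.

Definition assignment (X Sigma : Type) := X -> seq Sigma.

Fixpoint holds (X : finType) (Sigma : finType) (rho : assignment X Sigma)
  (f : formula X Sigma) : Prop :=
  match f with
  | FOr f1 f2 => holds rho f1 \/ holds rho f2
  | FNot f1 => ~ holds rho f1
  | FMatch x r => lang r (rho x)
  end.

Definition sol (X Sigma : finType) (F : seq (formula X Sigma))
  (rho : assignment X Sigma) : Prop :=
  forall f, List.In f F -> holds rho f.

Definition concat_assign (X Sigma : Type) (rho rho' : assignment X Sigma)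
  : assignment X Sigma := fun x => rho x ++ rho' x.

Definition valid_domain (X Sigma : finType) (F : seq (formula X Sigma))
  (rho : assignment X Sigma) (x : X) : seq Sigma -> Prop :=
  fun w => exists rho' : assignment X Sigma,
      rho' x = w /\ sol F (concat_assign rho rho').

(* Main.v *)
Require Import Defs.
From mathcomp Require Import all_boot.
From Stdlib Require Import Classical ClassicalEpsilon.
Set Implicit Arguments. Unset Strict Implicit. Unset Printing Implicit Defensive.

Definition pb (P : Prop) : bool := if excluded_middle_informative P then true else false.
Lemma pbP (P : Prop) : reflect P (pb P).
Proof. rewrite /pb; case: excluded_middle_informative => h; by constructor. Qed.

Record dfa (Sigma : finType) := DFA { st : finType; s0 : st; dl : st -> Sigma -> st; fn : st -> Prop }.

Definition dacc (Sigma : finType) (D : dfa Sigma) (q : st D) (w : seq Sigma) :=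
  fn (foldl (@dl _ D) q w).

Definition recog (Sigma : finType) (L : seq Sigma -> Prop) :=
  exists D : dfa Sigma, forall w, L w <-> dacc (s0 D) w.

Definition star (Sigma : finType) (L : seq Sigma -> Prop) (w : seq Sigma) :=
  exists ws : seq (seq Sigma), w = flatten ws /\ forall u, u \in ws -> L u.

Lemma star_nil (Sigma : finType) (L : seq Sigma -> Prop) : star L [::].
Proof. by exists [::]. Qed.

Lemma star_cat (Sigma : finType) (L : seq Sigma -> Prop) u v :
  L u -> star L v -> star L (u ++ v).
Proof.
move=> Lu [ws [-> H]]; exists (u :: ws); split => // u0.
by rewrite in_cons => /orP [/eqP -> | /H].
Qed.

Lemma star_dec (Sigma : finType) (L : seq Sigma -> Prop) w :
  star L w -> w <> [::] -> exists u v, w = u ++ v /\ u <> [::] /\ L u /\ star L v.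
Proof.
move=> [ws [-> H]]; elim: ws H => [|x ws IH] H //=.
case: x H => [|a x] H.
  move=> /= ne; apply: IH => // u uin; apply: H; by rewrite in_cons uin orbT.
move=> _; exists (a :: x), (flatten ws); split => //; split => //; split.
  by apply: H; rewrite in_cons eqxx.
exists ws; split => // u uin; apply: H; by rewrite in_cons uin orbT.
Qed.

Lemma star_ext (Sigma : finType) (L M : seq Sigma -> Prop) w :
  (forall u, L u -> M u) -> star L w -> star M w.
Proof. move=> H [ws [-> H']]; exists ws; split => // u /H'; exact: H. Qed.

Lemma recog_compl (Sigma : finType) (L : seq Sigma -> Prop) :
  recog L -> recog (fun w => ~ L w).
Proof.
move=> [D HD]; exists (DFA (s0 D) (@dl _ D) (fun q => ~ fn q)) => w.
rewrite /dacc /=; have := HD w; rewrite /dacc; tauto.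
Qed.

Lemma recog_quot (Sigma : finType) (L : seq Sigma -> Prop) u :
  recog L -> recog (fun w => L (u ++ w)).
Proof.
move=> [D HD]; exists (DFA (foldl (@dl _ D) (s0 D) u) (@dl _ D) (@fn _ D)) => w.
by rewrite /dacc /= -foldl_cat; apply: HD.
Qed.

Lemma recog_union (Sigma : finType) (L M : seq Sigma -> Prop) :
  recog L -> recog M -> recog (fun w => L w \/ M w).
Proof.
move=> [D1 H1] [D2 H2].
pose d (p : (st D1 * st D2)%type) a := (dl p.1 a, dl p.2 a).
exists (DFA (s0 D1, s0 D2) d (fun p => fn p.1 \/ fn p.2)) => w.
have E : forall w0 p, foldl d p w0 = (foldl (@dl _ D1) p.1 w0, foldl (@dl _ D2) p.2 w0).
  by elim => [|a w0 IH] [p1 p2] //=; rewrite IH.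
rewrite /dacc /= E /=; have := H1 w; have := H2 w; rewrite /dacc; tauto.
Qed.
Lemma recog_cat (Sigma : finType) (L M : seq Sigma -> Prop) :
  recog L -> recog M -> recog (fun w => exists u v, w = u ++ v /\ L u /\ M v).
Proof.
move=> [D1 H1] [D2 H2].
pose T := (st D1 * {set st D2})%type.
pose add (q : st D1) : {set st D2} := if pb (fn q) then [set s0 D2] else set0.
pose d (p : T) a := (dl p.1 a, [set dl q a | q in p.2] :|: add (dl p.1 a)).
pose f (p : T) := exists q, q \in p.2 /\ fn q.
pose D := DFA ((s0 D1, add (s0 D1)) : T) d f.
have inv : forall w (q : st D1) (S : {set st D2}), dacc (D := D) (q, S) w <->
   (exists p, p \in S /\ dacc p w) \/
   (exists u v, w = u ++ v /\ u <> [::] /\ dacc q u /\ dacc (s0 D2) v).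
  elim => [|a w IH] q S.
    rewrite /dacc /=; split; first by left.
    by case => // [[u [v [E [un _]]]]]; case: u E un.
  have -> : dacc (D := D) (q, S) (a :: w) = dacc (D := D) (d (q, S) a) w by [].
  rewrite IH; split.
  - case => [[p [pin pacc]] | [u [v [-> [un [uacc vacc]]]]]].
      move: pin; rewrite in_setU => /orP [/imsetP [p0 p0in pe] | ].
        subst p.
        by left; exists p0.
      rewrite /add; case: pbP => h; last by rewrite in_set0.
      rewrite in_set1 => /eqP pe; right; exists [:: a], w; split => //.
      by split => //; split => //; rewrite -pe.
    by right; exists (a :: u), v.
  - case => [[p [pin pacc]] | [u [v [E [un [uacc vacc]]]]]].
      left; exists (dl p a); split => //.
      by rewrite in_setU; apply/orP; left; apply/imsetP; exists p.
    case: u E un uacc => [//|b u] [<- ->] _ uacc.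
    case: u uacc => [|c u] uacc.
      left; exists (s0 D2); split => //.
      by rewrite in_setU /add; case: pbP => // h; rewrite in_set1 eqxx orbT.
    by right; exists (c :: u), v.
exists D => w; rewrite (inv w (s0 D1) (add (s0 D1))); split.
- move=> [u [v [-> [Lu Mv]]]]; rewrite H2 in Mv.
  case: u Lu => [|b u] Lu.
    left; exists (s0 D2); split; last exact: Mv.
    by rewrite /add; case: pbP => // h; [rewrite in_set1 | case: h; rewrite H1 in Lu].
  by right; exists (b :: u), v; split => //; split => //; split => //; rewrite -H1.
- case => [[p [pin pacc]] | [u [v [-> [_ [uacc vacc]]]]]].
    move: pin; rewrite /add; case: pbP => h; last by rewrite in_set0.
    rewrite in_set1 => /eqP pe; exists [::], w; split => //; split.
      by rewrite H1.
    by rewrite H2 -pe.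
  by exists u, v; rewrite H1 H2.
Qed.
Lemma recog_star (Sigma : finType) (L : seq Sigma -> Prop) :
  recog L -> recog (star L).
Proof.
move=> [D1 H1].
pose s := s0 D1.
pose A := dacc s.
pose step (SS : {set st D1}) a : {set st D1} :=
  [set dl q a | q in SS] :|: (if pb (exists t, t \in [set dl q a | q in SS] /\ fn t) then [set s] else set0).
pose d (o : option {set st D1}) a :=
  Some (step (if o is Some SS then SS else [set s]) a).
pose f (o : option {set st D1}) := if o is Some SS then exists q, q \in SS /\ fn q else True.
pose D := DFA (None : option {set st D1}) d f.
have inv : forall w SS, dacc (D := D) (Some SS) w <->
   (w = [::] /\ exists q, q \in SS /\ fn q) \/
   (exists q u v, q \in SS /\ w = u ++ v /\ u <> [::] /\ dacc q u /\ star A v).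
  elim => [|a w IH] SS.
    rewrite /dacc /=; split; first by left.
    by case => [[_ //]|[q [u [v [_ [E [un _]]]]]]]; case: u E un.
  have -> : dacc (D := D) (Some SS) (a :: w) = dacc (D := D) (Some (step SS a)) w by [].
  rewrite IH.
  have core : ((w = [::] /\ exists q, q \in step SS a /\ fn q) \/
   (exists q u v, q \in step SS a /\ w = u ++ v /\ u <> [::] /\ dacc q u /\ star A v)) <->
   (exists q u v, q \in SS /\ w = u ++ v /\ dacc (dl q a) u /\ star A v).
    clear IH; split.
    - case => [[-> [t [tin ft]]] | [t [u [v [tin [E [un [tacc sv]]]]]]]].
        move: tin; rewrite in_setU => /orP [/imsetP [q qin tq] | ].
          by exists q, [::], [::]; subst t; split => //; split => //; split => //; exact: star_nil.
        case: pbP => [[t' [/imsetP [q qin tq] ft']] _| _]; last by rewrite in_set0.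
        by exists q, [::], [::]; subst t'; split => //; split => //; split => //; exact: star_nil.
      move: tin; rewrite in_setU => /orP [/imsetP [q qin tq] | ].
        by exists q, u, v; subst t.
      case: pbP => [[t' [/imsetP [q qin tq] ft']] | _]; last by rewrite in_set0.
      rewrite in_set1 => /eqP ts; subst t t'.
      exists q, [::], (u ++ v); split => //; split => //; split => //.
      by apply: star_cat.
    - case => [q [u [v [qin [E [uacc sv]]]]]].
      have tin : dl q a \in [set dl q a | q in SS] by apply/imsetP; exists q.
      case: u E uacc => [|b u] E uacc; last first.
        by right; exists (dl q a), (b :: u), v; rewrite in_setU tin.
      rewrite /= in E; rewrite -E in sv.
      clear E; case: w sv => [|c w] sv.
        by left; split => //; exists (dl q a); rewrite in_setU tin.
      right; have [u' [v' [E [un [Au sv']]]]] := star_dec sv ltac:(by []).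
      exists s, u', v'; split => //.
      rewrite in_setU; case: pbP => [_|h]; first by rewrite in_set1 eqxx orbT.
      by case: h; exists (dl q a).
  rewrite core; split.
  - case => [q [u [v [qin [E [uacc sv]]]]]].
    by right; exists q, (a :: u), v; rewrite E.
  - case => [[//]|[q [u [v [qin [E [un [uacc sv]]]]]]]].
    case: u E un uacc => [//|b u] [<- E] _ uacc.
    by exists q, u, v.
have Astar : forall w, star A w <-> star L w.
  by move=> w; split; apply: star_ext => u; rewrite H1.
exists D => w; rewrite -Astar.
case: w => [|a w].
  by split => // _; exact: star_nil.
have -> : dacc (D := D) (s0 D) (a :: w) = dacc (D := D) (Some [set s]) (a :: w) by [].
rewrite inv; split.
- move=> sw; right; have [u [v [E [un [Au sv]]]]] := star_dec sw ltac:(by []).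
  by exists s, u, v; rewrite in_set1.
- case => [[//]|[q [u [v [qin [E [un [uacc sv]]]]]]]].
  move: qin; rewrite in_set1 => /eqP qs; subst q.
  by rewrite E; apply: star_cat.
Qed.
Lemma recog_ext (Sigma : finType) (L M : seq Sigma -> Prop) :
  (forall w, L w <-> M w) -> recog L -> recog M.
Proof. move=> H [D HD]; exists D => w; rewrite -HD; exact: iff_sym (H w). Qed.

Lemma regex_recog (Sigma : finType) (r : regex Sigma) : recog (lang r).
Proof.
elim: r => [|||r1 IH1 r2 IH2|r1 IH1 r2 IH2|r1 IH1].
- by exists (DFA tt (fun _ (_ : Sigma) => tt) (fun _ => False)).
- exists (DFA true (fun _ (_ : Sigma) => false) (fun b => b = true)) => w.
  rewrite /dacc /=; case: w => [|a w] //=.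
  have -> : forall w0, foldl (fun _ (_ : Sigma) => false) false w0 = false by elim.
  by [].
- move=> c.
  pose d (q : option bool) (b : Sigma) :=
    if q is Some false then (if b == c then Some true else None) else None.
  exists (DFA (Some false) d (fun q => q = Some true)) => w.
  have dead : forall w0, foldl d None w0 = None by elim.
  rewrite /dacc /=; case: w => [|b w] //=.
  have [->|ne] := eqVneq b c.
    case: w => [|b' w] //=; rewrite dead; split; [by case | by move=> E].
  rewrite dead; split; [case => E; by rewrite E eqxx in ne | by move=> E].
- apply: recog_ext (recog_cat IH1 IH2) => w; by [].
- apply: recog_ext (recog_union IH1 IH2) => w; by [].
- by apply: recog_ext (recog_star IH1) => w.
Qed.
Fixpoint reach (Sigma : finType) (Q : finType) (d : Q -> Sigma -> Q) (X : {set Q})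
  (p : Q) (w : seq Sigma) (q : Q) : Prop :=
  match w with
  | [::] => p = q
  | a :: w' => match w' with
               | [::] => d p a = q
               | _ => d p a \in X /\ reach d X (d p a) w' q
               end
  end.

Lemma reach_all (Sigma Q : finType) (d : Q -> Sigma -> Q) p w q :
  reach d setT p w q <-> foldl d p w = q.
Proof.
elim: w p => [|a w IH] p //=.
case: w IH => [|b w] IH //=.
rewrite in_setT; split; first by case => _ /IH.
by move=> h; split => //; apply/IH.
Qed.

Lemma reach_mono (Sigma Q : finType) (d : Q -> Sigma -> Q) (X Y : {set Q}) p w q :
  X \subset Y -> reach d X p w q -> reach d Y p w q.
Proof.
move=> sXY; elim: w p => [|a w IH] p //=.
case: w IH => [|b w] IH //= [h1 h2]; split; first exact: (subsetP sXY).
exact: IH.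
Qed.

Lemma reach_cat (Sigma Q : finType) (d : Q -> Sigma -> Q) (Y : {set Q}) p m q u v :
  reach d Y p u m -> reach d Y m v q -> (m \in Y \/ u = [::] \/ v = [::]) ->
  reach d Y p (u ++ v) q.
Proof.
case: v => [|c v]; first by rewrite cats0 => h1 /= <-.
elim: u p => [|a u IH] p /=; first by move=> ->.
case: u IH => [|b u] IH.
  move=> h1 h2 h3 /=; split; last by rewrite h1.
  by case: h3 => [|[//|//]]; rewrite h1.
move=> [h1 h2] h3 h4 /=; split => //.
have := IH _ h2 h3; apply.
by case: h4 => [->|[//|//]]; left.
Qed.

Lemma first_split (Sigma Q : finType) (d : Q -> Sigma -> Q) (X : {set Q}) z p w q :
  reach d (z |: X) p w q ->
  reach d X p w q \/ exists u v, w = u ++ v /\ u <> [::] /\ v <> [::] /\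
     reach d X p u z /\ reach d (z |: X) z v q.
Proof.
elim: w p => [|a w IH] p /=; first by left.
case: w IH => [|b w] IH; first by left.
move=> [h1 h2].
have [e|ne] := eqVneq (d p a) z.
  right; exists [:: a], (b :: w); split => //; split => //; split => //; split => //.
  by move: h2; rewrite e.
have hX : d p a \in X by move: h1; rewrite in_setU1 (negbTE ne).
case: (IH _ h2) => [h|[u [v [E [un [vn [hu hv]]]]]]]; first by left.
right; exists (a :: u), v; rewrite E; split => //; split => //; split => //; split => //.
by case: u E un hu => [//|c u] /= _ _ hu.
Qed.

Lemma z_loop (Sigma Q : finType) (d : Q -> Sigma -> Q) (X : {set Q}) z v q :
  reach d (z |: X) z v q ->
  exists vs v', v = flatten vs ++ v' /\ (forall s, s \in vs -> reach d X z s z) /\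
     reach d X z v' q.
Proof.
move: {2}(size v).+1 (ltnSn (size v)) => n; elim: n v => [//|n IH] v sv h.
case: (first_split h) => [h'|[u [v1 [E [un [vn [hu hv]]]]]]].
  by exists [::], v.
have sv1 : size v1 < n.
  move: sv; rewrite E size_cat; case: u un {E hu} => [//|c u] _ /=.
  by rewrite ltnS => /(leq_trans _); apply; rewrite addSn ltnS leq_addl.
have [vs [v' [E1 [hvs hv']]]] := IH _ sv1 hv.
exists (u :: vs), v'; rewrite E E1 /= catA; split => //; split => // s.
by rewrite in_cons => /orP [/eqP ->|/hvs].
Qed.

Lemma z_loop_back (Sigma Q : finType) (d : Q -> Sigma -> Q) (X : {set Q}) z vs v' q :
  (forall s, s \in vs -> reach d X z s z) -> reach d X z v' q ->
  reach d (z |: X) z (flatten vs ++ v') q.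
Proof.
have sub : X \subset z |: X by apply/subsetP => y yin; rewrite in_setU1 yin orbT.
elim: vs => [|s vs IH] hvs hv /=; first exact: reach_mono hv.
rewrite -catA; apply: (@reach_cat _ _ _ _ _ z).
- apply: reach_mono sub _; apply: hvs; by rewrite in_cons eqxx.
- apply: IH => // s0 s0in; apply: hvs; by rewrite in_cons s0in orbT.
- by left; rewrite setU11.
Qed.
Lemma lang_atoms (Sigma : finType) (l : seq Sigma) w :
  lang (foldr (@RUnion Sigma) (@RVoid Sigma) (map (@RAtom Sigma) l)) w <->
  exists a, a \in l /\ w = [:: a].
Proof.
elim: l => [|b l IH] /=; first by split => // [[a []]].
rewrite IH; split.
- case => [->|[a [ain ->]]]; first by exists b; rewrite in_cons eqxx.
  by exists a; rewrite in_cons ain orbT.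
- case => [a [ain ->]]; move: ain; rewrite in_cons => /orP [/eqP ->|ain]; first by left.
  by right; exists a.
Qed.

Lemma reach_regex (Sigma Q : finType) (d : Q -> Sigma -> Q) (l : seq Q) :
  exists R : Q -> Q -> regex Sigma, forall p q w,
    lang (R p q) w <-> reach d [set x in l] p w q.
Proof.
elim: l => [|z l [R HR]].
  exists (fun p q => RUnion (if p == q then REps Sigma else RVoid Sigma)
     (foldr (@RUnion Sigma) (@RVoid Sigma) (map (@RAtom Sigma) [seq a <- enum Sigma | d p a == q]))).
  move=> p q w; rewrite /= lang_atoms.
  have Eif : forall w0, lang (if p == q then REps Sigma else RVoid Sigma) w0 <-> (w0 = [::] /\ p = q).
    move=> w0; case: eqP => [->|ne] /=; first tauto.
    split => // [[_ e]]; by case: ne.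
  rewrite Eif; case: w => [|a [|b w]] /=.
  - split; first by case => [[]|[a [_ //]]].
    by move=> e; left.
  - split.
      case => [[//]|[c [cin [ac]]]]; move: cin; rewrite mem_filter => /andP [/eqP e _].
      by rewrite ac.
    by move=> e; right; exists a; rewrite mem_filter e eqxx mem_enum.
  - rewrite inE; split => [|[//]]; case; first by case.
    by case => c [_ //].
exists (fun p q => RUnion (R p q) (RCat (R p z) (RCat (RStar (R z z)) (R z q)))).
have -> : [set x in z :: l] = z |: [set x in l].
  by apply/setP => y; rewrite !inE.
move=> p q w /=; rewrite HR; split.
- case => [h|[u [v [-> [hu [v1 [v2 [-> [[ws [-> hws]] hv2]]]]]]]]].
    apply: reach_mono h; apply/subsetP => y yin; by rewrite in_setU1 yin orbT.
  rewrite HR in hu; rewrite HR in hv2.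
  apply: (reach_cat (m := z)); last by left; rewrite setU11.
    apply: reach_mono hu; apply/subsetP => y yin; by rewrite in_setU1 yin orbT.
  apply: z_loop_back => // s sin; apply/HR; exact: hws.
- move=> h; case: (first_split h) => [h'|[u [v [E [un [vn [hu hv]]]]]]]; first by left.
  right; have [vs [v' [E1 [hvs hv']]]] := z_loop hv.
  exists u, v; split => //; split; first by apply/HR.
  exists (flatten vs), v'; split => //; split; last by apply/HR.
  exists vs; split => // s /hvs; by move/HR.
Qed.
Lemma regular_ext (Sigma : finType) (L M : seq Sigma -> Prop) :
  (forall w, L w <-> M w) -> regular L -> regular M.
Proof. move=> H [r Hr]; exists r => w; rewrite -Hr; exact: iff_sym (H w). Qed.

Lemma fin_union (Sigma T : finType) (P : T -> Prop) (L : T -> seq Sigma -> Prop) :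
  (forall t, regular (L t)) -> regular (fun w => exists t, P t /\ L t w).
Proof.
move=> HL.
suff H : forall l : seq T, regular (fun w => exists t, t \in l /\ P t /\ L t w).
  apply: regular_ext (H (enum T)) => w; split.
  - by case => t [_ h]; exists t.
  - by case => t h; exists t; rewrite mem_enum.
elim => [|t l [r Hr]].
  by exists (RVoid Sigma) => w; split => // [[t []]].
have [rt Hrt] := HL t.
case: (classic (P t)) => Pt.
  exists (RUnion rt r) => w /=; rewrite -Hr -Hrt; split.
  - case => t0 [t0in [Pt0 Lt0]]; move: t0in; rewrite in_cons => /orP [/eqP e|t0in].
      by left; rewrite -e.
    by right; exists t0.
  - case => [h|[t0 [t0in h]]]; first by exists t; rewrite in_cons eqxx.
    by exists t0; rewrite in_cons t0in orbT.
exists r => w; rewrite -Hr; split.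
- case => t0 [t0in [Pt0 Lt0]]; move: t0in; rewrite in_cons => /orP [/eqP e|t0in].
    by case: Pt; rewrite -e.
  by exists t0.
- case => [t0 [t0in h]]; by exists t0; rewrite in_cons t0in orbT.
Qed.

Lemma recog_regular (Sigma : finType) (L : seq Sigma -> Prop) : recog L -> regular L.
Proof.
move=> [D HD].
have [R HR] := reach_regex (@dl _ D) (enum (st D)).
have : regular (fun w => exists q, fn q /\ lang (R (s0 D) q) w).
  apply: fin_union => q; by exists (R (s0 D) q).
apply: regular_ext => w; rewrite HD /dacc; split.
- case => q [fq]; rewrite HR.
  have -> : [set x in enum (st D)] = setT by apply/setP => y; rewrite !inE mem_enum.
  by rewrite reach_all => ->.
- move=> h; exists (foldl (@dl _ D) (s0 D) w); split => //; rewrite HR.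
  have -> : [set x in enum (st D)] = setT by apply/setP => y; rewrite !inE mem_enum.
  by rewrite reach_all.
Qed.

Lemma regular_recog (Sigma : finType) (L : seq Sigma -> Prop) : regular L -> recog L.
Proof. move=> [r Hr]; apply: recog_ext (regex_recog r) => w; exact: iff_sym (Hr w). Qed.

Lemma regular_compl (Sigma : finType) (L : seq Sigma -> Prop) :
  regular L -> regular (fun w => ~ L w).
Proof. by move=> /regular_recog /recog_compl /recog_regular. Qed.

Lemma regular_quot (Sigma : finType) (L : seq Sigma -> Prop) u :
  regular L -> regular (fun w => L (u ++ w)).
Proof. by move=> /regular_recog /(recog_quot u) /recog_regular. Qed.

Lemma fin_inter (Sigma T : finType) (L : T -> seq Sigma -> Prop) :
  (forall t, regular (L t)) -> regular (fun w => forall t, L t w).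
Proof.
move=> HL.
have : regular (fun w => ~ exists t, True /\ ~ L t w).
  by apply: regular_compl; apply: fin_union => t; apply: regular_compl.
apply: regular_ext => w; split.
- move=> h t; apply: NNPP => h'; apply: h; by exists t.
- by move=> h [t [_ h']]; apply: h'.
Qed.

Lemma regular_iffb (Sigma : finType) (L : seq Sigma -> Prop) (b : bool) :
  regular L -> regular (fun w => b = true <-> L w).
Proof.
case: b => h.
  by apply: regular_ext h => w; tauto.
apply: regular_ext (regular_compl h) => w; split; last by move=> [_ H] /H.
by move=> H; split.
Qed.
Fixpoint atoms (X Sigma : finType) (f : formula X Sigma) : seq (X * regex Sigma) :=
  match f with
  | FOr f1 f2 => atoms f1 ++ atoms f2
  | FNot f1 => atoms f1
  | FMatch y r => [:: (y, r)]
  end.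

Lemma In_cat (A : Type) (a : A) (l1 l2 : seq A) :
  List.In a (l1 ++ l2) <-> List.In a l1 \/ List.In a l2.
Proof. elim: l1 => [|b l1 IH] /=; [tauto | rewrite IH; tauto]. Qed.

Lemma holds_ext (X Sigma : finType) (r1 r2 : assignment X Sigma) (f : formula X Sigma) :
  (forall y r, List.In (y, r) (atoms f) -> (lang r (r1 y) <-> lang r (r2 y))) ->
  (holds r1 f <-> holds r2 f).
Proof.
elim: f => [f1 IH1 f2 IH2|f1 IH1|y r] /= H.
- rewrite IH1 ?IH2 //; move=> y r hin; apply: H; rewrite In_cat; tauto.
- by rewrite IH1.
- by apply: H; left.
Qed.

Fixpoint allregs (X Sigma : finType) (F : seq (formula X Sigma)) : seq (regex Sigma) :=
  match F with
  | [::] => [::]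
  | f :: F' => map snd (atoms f) ++ allregs F'
  end.

Lemma In_map_snd (A B : Type) (a : A) (b : B) (l : seq (A * B)) :
  List.In (a, b) l -> List.In b (map snd l).
Proof. elim: l => [|[a' b'] l IH] //= [[_ ->]|h]; [by left | by right; apply: IH]. Qed.

Lemma In_allregs (X Sigma : finType) (F : seq (formula X Sigma)) f y r :
  List.In f F -> List.In (y, r) (atoms f) -> List.In r (allregs F).
Proof.
elim: F => [//|f0 F IH] /= [->|h] ha; rewrite In_cat.
  by left; apply: In_map_snd ha.
by right; apply: IH.
Qed.

Lemma In_nth' (A : Type) (d : A) (a : A) (l : seq A) :
  List.In a l -> exists i, i < size l /\ nth d l i = a.
Proof.
elim: l => [//|b l IH] /= [->|h]; first by exists 0.
by have [i [hi e]] := IH h; exists i.+1.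
Qed.

Theorem theorem1 (X Sigma : finType) (F : seq (formula X Sigma))
  (x : X) (rho : assignment X Sigma) :
  regular (valid_domain F rho x).
Proof.
pose rs := allregs F.
pose k := size rs.
pose al (i : 'I_k) := nth (RVoid Sigma) rs i.
pose good (bv : {ffun 'I_k -> bool}) := exists rho' : assignment X Sigma,
  (forall i, bv i = true <-> lang (al i) (rho x ++ rho' x)) /\ sol F (concat_assign rho rho').
have : regular (fun w => exists bv, good bv /\
          (fun w => forall i, bv i = true <-> lang (al i) (rho x ++ w)) w).
  apply: fin_union => bv; apply: fin_inter => i; apply: regular_iffb.
  by apply: (regular_quot (L := lang (al i))); exists (al i).
apply: regular_ext => w; split.
- move=> [bv [[rho'' [hb hsol]] hw]].
  pose rho' := fun y => if y == x then w else rho'' y.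
  exists rho'; split; first by rewrite /rho' eqxx.
  move=> f fin; have := hsol f fin; apply: (proj1 (holds_ext _)).
  move=> y r hin; rewrite /concat_assign /rho'.
  case: eqP => [->|//].
  have [n [hn e]] := In_nth' (RVoid Sigma) (In_allregs fin hin).
  have := hb (Ordinal hn); have := hw (Ordinal hn); rewrite /al /= -/rs e.
  move=> h1 h2; rewrite -h1 -h2; tauto.
- move=> [rho' [hx hsol]].
  exists [ffun i => pb (lang (al i) (rho x ++ w))]; split.
    exists rho'; split => // i; rewrite ffunE hx; split; by move/pbP.
  by move=> i; rewrite ffunE; split; move/pbP.
Qed.
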